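(* Let $\mathbb{T}\colon\mathbb{R}^d\to\mathbb{R}^d$ be nonexpansive and let $y_\star\in\mathrm{Fix}\,\mathbb{T}$. Let $N\ge 1$ be an integer, let $y_0\in\mathbb{R}^d$, set $\mathbb{T}y_{-1}:=y_0$, and define \[ y_{k+1} = y_k + \frac{N-k-1}{N-k}\left(\mathbb{T}y_k - \mathbb{T}y_{k-1}\right), \qquad k=0,1,\dots,N-2 \] (the Dual Optimal Halpern Method, Dual-OHM). Then \[ \|y_{N-1} - \mathbb{T}y_{N-1}\|^2 \le \frac{4\|y_0 - y_\star\|^2}{N^2}. \]
   Context: $\mathbb{T}$ is nonexpansive if $\|\mathbb{T}x-\mathbb{T}y\|\le\|x-y\|$ for all $x,y$. $\mathrm{Fix}\,\mathbb{T}=\{y:\ y=\mathbb{T}y\}$. *)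

(* Defs.v *)
From HB Require Import structures.
From mathcomp Require Import all_boot all_order all_algebra.
From mathcomp Require Import reals.
Set Implicit Arguments. Unset Strict Implicit. Unset Printing Implicit Defensive.
Import Order.TTheory GRing.Theory Num.Theory.
Local Open Scope ring_scope.

Definition sqnorm (R : realType) (d : nat) (x : 'rV[R]_d) : R :=
  \sum_(i < d) (x ord0 i) ^+ 2.

Definition enorm (R : realType) (d : nat) (x : 'rV[R]_d) : R :=
  Num.sqrt (sqnorm x).

Definition nonexpansive (R : realType) (d : nat) (T : 'rV[R]_d -> 'rV[R]_d) :=
  forall x y, enorm (T x - T y) <= enorm (x - y).

Definition is_fixed (R : realType) (d : nat) (T : 'rV[R]_d -> 'rV[R]_d)
  (y : 'rV[R]_d) := T y = y.

(* Dual-OHM: state (y_k, T y_{k-1}), with the convention T y_{-1} := y_0.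
   y_{k+1} = y_k + (N-k-1)/(N-k) (T y_k - T y_{k-1}). *)
Fixpoint dual_ohm_state (R : realType) (d : nat) (T : 'rV[R]_d -> 'rV[R]_d)
  (N : nat) (y0 : 'rV[R]_d) (k : nat) : 'rV[R]_d * 'rV[R]_d :=
  match k with
  | 0 => (y0, y0)
  | k'.+1 =>
      let (yk, Tprev) := dual_ohm_state T N y0 k' in
      (yk + (((N - k' - 1)%:R / (N - k')%:R) : R) *: (T yk - Tprev), T yk)
  end.

Definition dual_ohm (R : realType) (d : nat) (T : 'rV[R]_d -> 'rV[R]_d)
  (N : nat) (y0 : 'rV[R]_d) (k : nat) : 'rV[R]_d :=
  (dual_ohm_state T N y0 k).1.

(* Main.v *)
Require Import Defs.
From HB Require Import structures.
From mathcomp Require Import all_boot all_order all_algebra.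
From mathcomp Require Import reals.
From mathcomp Require Import ring zify.
Import Order.TTheory GRing.Theory Num.Theory.
Local Open Scope ring_scope.

Section Aux.
Variable R : realType.

Definition phiP (m u v : R) : R := u - (m - 1) / m * v.
Definition phiG (m u v : R) : R := phiP m u v / m - v / (m * m).
Definition phi (N m a u v p t : R) : R :=
  2 * phiG m u v * phiP m u v + (m - 1) / m * (phiP m u v * phiP m u v - v * v / (m * m))
  - 2 * (phiG m u v + phiP m u v - a / N) * p + 2 * (phiP m u v - a / N) * t
  + (1 / m - 1 / N) * (p * p - t * t).

Variable d : nat.
Definition Cv (N m : R) (a u v p t s : 'rV[R]_d) : R :=
  \sum_(i < d) phi N m (a ord0 i - s ord0 i) (u ord0 i - s ord0 i) (v ord0 i - s ord0 i)
     (p ord0 i - s ord0 i) (t ord0 i - s ord0 i).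

Lemma sqnorm_ge0 (x : 'rV[R]_d) : 0 <= sqnorm x.
Proof. by apply: sumr_ge0 => i _; apply: sqr_ge0. Qed.

Lemma enorm_sq (x : 'rV[R]_d) : enorm x ^+ 2 = sqnorm x.
Proof. by rewrite /enorm sqr_sqrtr // sqnorm_ge0. Qed.

Lemma ne_sq (T : 'rV[R]_d -> 'rV[R]_d) : nonexpansive T ->
  forall x y, sqnorm (T x - T y) <= sqnorm (x - y).
Proof. by move=> hT x y; have := hT x y; rewrite /enorm ler_sqrt // sqnorm_ge0. Qed.

End Aux.
Arguments Cv {R d}.
Arguments sqnorm_ge0 {R d}.
Arguments ne_sq {R d T}.

Lemma inv_lemma (R : realType) (d : nat) (T : 'rV[R]_d -> 'rV[R]_d)
  (s y0 : 'rV[R]_d) (N : nat) : nonexpansive T ->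
  forall K, (K < N)%N -> forall p : 'rV[R]_d,
  0 <= Cv N%:R (N - K)%:R y0 (dual_ohm_state T N y0 K).1
          (dual_ohm_state T N y0 K).2 p (T p) s.
Proof.
move=> hT; elim=> [|K IH] hK p.
  rewrite /= subn0 /Cv big1 // => i _.
  have hN : (N%:R : R) != 0 by rewrite pnatr_eq0 -lt0n.
  rewrite /phi /phiG /phiP; field; exact: hN.
have hK' : (K < N)%N by apply: ltnW.
have := IH hK' p.
rewrite [dual_ohm_state _ _ _ K.+1]/=.
case E: (dual_ohm_state T N y0 K) => [u v] /= H.
have ej : (N - K)%N = (N - K.+2).+2 by lia.
have ej1 : (N - K - 1)%N = (N - K.+2).+1 by lia.
have ej2 : (N - K.+1)%N = (N - K.+2).+1 by lia.
move: H; rewrite ej ?ej1 ej2; set j := (N - K.+2)%N => H.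
have hN : (N%:R : R) != 0 by rewrite pnatr_eq0 -lt0n; lia.
have e : Cv N%:R j.+1%:R y0 (u + (j.+1%:R / j.+2%:R) *: (T u - v)) (T u) p (T p) s =
   Cv N%:R j.+2%:R y0 u v p (T p) s +
   (j.+1%:R * j.+2%:R)^-1 * (sqnorm (u - p) - sqnorm (T u - T p)).
  rewrite /Cv /sqnorm -sumrB mulr_sumr -big_split /=; apply: eq_bigr => i _.
  rewrite !mxE /phi /phiG /phiP -!natr1.
  have h1 : (j%:R + 1 : R) != 0 by rewrite natr1 pnatr_eq0.
  have h2 : (j%:R + 1 + 1 : R) != 0 by rewrite !natr1 pnatr_eq0.
  field; rewrite ?h1 ?h2 ?hN //.
rewrite e; apply: addr_ge0 => //.
apply: mulr_ge0; first by rewrite invr_ge0 mulr_ge0 // ler0n.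
by rewrite subr_ge0 ne_sq.
Qed.

Theorem theorem3p3 (R : realType) (d : nat) (T : 'rV[R]_d -> 'rV[R]_d)
  (ystar y0 : 'rV[R]_d) (N : nat) :
  nonexpansive T -> is_fixed T ystar -> (1 <= N)%N ->
  enorm (dual_ohm T N y0 N.-1 - T (dual_ohm T N y0 N.-1)) ^+ 2
    <= 4 * enorm (y0 - ystar) ^+ 2 / (N%:R ^+ 2).
Proof.
move=> hT hfix hN.
have hK : (N.-1 < N)%N by lia.
rewrite /dual_ohm.
set u := (dual_ohm_state T N y0 N.-1).1.
have H := @inv_lemma R d T ystar y0 N hT _ hK u.
have e1 : (N - N.-1)%N = 1%N by lia.
rewrite e1 in H.
rewrite !enorm_sq.
have Hs := ne_sq hT u ystar.
rewrite hfix in Hs.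
have hN0 : (N%:R : R) != 0 by rewrite pnatr_eq0 -lt0n.
rewrite -subr_ge0.
have e : 4 * sqnorm (y0 - ystar) / N%:R ^+ 2 - sqnorm (u - T u) =
  \sum_(i < d) ((2 / N%:R) * (y0 ord0 i - ystar ord0 i) - (u ord0 i - T u ord0 i)) ^+ 2
  + 2 * (Cv N%:R 1 y0 u (dual_ohm_state T N y0 N.-1).2 u (T u) ystar
         + N%:R^-1 * (sqnorm (u - ystar) - sqnorm (T u - ystar))).
  rewrite /Cv /sqnorm mulr_sumr mulr_suml -!sumrB mulr_sumr -!big_split /=.
  rewrite mulr_sumr -big_split /=; apply: eq_bigr => i _.
  rewrite !mxE /phi /phiG /phiP; field; exact: hN0.
rewrite e; apply: addr_ge0.
  by apply: sumr_ge0 => i _; apply: sqr_ge0.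
apply: mulr_ge0 => //; apply: addr_ge0.
  exact: H.
by apply: mulr_ge0; [rewrite invr_ge0 ler0n | rewrite subr_ge0].
Qed.
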